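(* Let $A$ be an $m\times n$ matrix with entries in $[0,1]$ and no zero column, let $\epsilon>0$, $\alpha>0$, and run DIMSUM on $A$ with parameter $\gamma\ge \alpha/\epsilon$, producing $B$. Then for any two columns $c_i,c_j$ with $\cos(c_i,c_j)\ge\epsilon$ and any $\delta>0$, $$\Pr\left[\|c_i\|\|c_j\|\,b_{ij}>(1+\delta)[A^TA]_{ij}\right]\le\left(\frac{e^{\delta}}{(1+\delta)^{1+\delta}}\right)^{\alpha},$$ and for any $\delta\in(0,1)$, $$\Pr\left[\|c_i\|\|c_j\|\,b_{ij}<(1-\delta)[A^TA]_{ij}\right]<\exp(-\alpha\delta^2/2).$$
   Context: Let $A=(a_{ki})$ be an $m\times n$ real matrix with rows $r_1,\dots,r_m$ and columns $c_1,\dots,c_n$; $\|c_i\|$ is the Euclidean norm of column $i$ (assumed nonzero), and $\cos(c_i,c_j)=\frac{c_i^Tc_j}{\|c_i\|\|c_j\|}$. DIMSUM with parameter $\gamma>0$ is the following randomized procedure. For each pair of column indices $(i,j)$ set $p_{ij}=\min\!\left(1,\frac{\gamma}{\|c_i\|\|c_j\|}\right)$. For each row $k$ and each pair $(i,j)$ with $a_{ki}a_{kj}\neq 0$, independently (over all $k$ and all pairs) with probability $p_{ij}$ the value $a_{ki}a_{kj}$ is emitted to key $(i,j)$ (one ''emission''); equivalently let $X_{ijk}$ equal $a_{ki}a_{kj}$ with probability $p_{ij}$ and $0$ otherwise. The output is the $n\times n$ matrix $B$ with $b_{ij}=\frac{1}{\gamma}\sum_{k=1}^m X_{ijk}$ if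 $\frac{\gamma}{\|c_i\|\|c_j\|}\le 1$, and $b_{ij}=\frac{1}{\|c_i\|\|c_j\|}\sum_{k=1}^m X_{ijk}$ otherwise. *)

(* Defs.v *)
From mathcomp Require Import all_boot.
From Stdlib Require Import Reals.
Set Implicit Arguments. Unset Strict Implicit. Unset Printing Implicit Defensive.
Local Open Scope R_scope.

Definition Rltb (x y : R) : bool := if Rlt_dec x y then true else false.

(* A is an m x n real matrix, A k i = a_{ki} (row k, column i) *)
Definition colnorm (m n : nat) (A : 'I_m -> 'I_n -> R) (i : 'I_n) : R :=
  sqrt (\big[Rplus/0]_(k < m) (A k i * A k i)).

Definition gram (m n : nat) (A : 'I_m -> 'I_n -> R) (i j : 'I_n) : R :=
  \big[Rplus/0]_(k < m) (A k i * A k j).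

Definition cosc (m n : nat) (A : 'I_m -> 'I_n -> R) (i j : 'I_n) : R :=
  gram A i j / (colnorm A i * colnorm A j).

Definition pij (m n : nat) (A : 'I_m -> 'I_n -> R) (gamma : R) (i j : 'I_n) : R :=
  Rmin 1 (gamma / (colnorm A i * colnorm A j)).

(* Sample space of DIMSUM: one independent coin per (row k, pair (i,j)). *)
Definition outcome (m n : nat) := {ffun 'I_m * 'I_n * 'I_n -> bool}.

Definition weight (m n : nat) (A : 'I_m -> 'I_n -> R) (gamma : R)
  (w : outcome m n) : R :=
  \big[Rmult/1]_(t : 'I_m * 'I_n * 'I_n)
     (if w t then pij A gamma t.1.2 t.2 else 1 - pij A gamma t.1.2 t.2).

Definition Xv (m n : nat) (A : 'I_m -> 'I_n -> R) (w : outcome m n)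
  (i j : 'I_n) (k : 'I_m) : R :=
  if w (k, i, j) then A k i * A k j else 0.

Definition dimsum_b (m n : nat) (A : 'I_m -> 'I_n -> R) (gamma : R)
  (w : outcome m n) (i j : 'I_n) : R :=
  let s := \big[Rplus/0]_(k < m) Xv A w i j k in
  if Rle_dec (gamma / (colnorm A i * colnorm A j)) 1 then s / gamma
  else s / (colnorm A i * colnorm A j).

Definition Pr (m n : nat) (A : 'I_m -> 'I_n -> R) (gamma : R)
  (E : outcome m n -> bool) : R :=
  \big[Rplus/0]_(w : outcome m n | E w) weight A gamma w.

(* Main.v *)
From HB Require Import structures.
Require Import Defs.
From mathcomp Require Import all_boot.
From Stdlib Require Import Reals Lra.
From Coquelicot Require Import Coquelicot.
Local Open Scope R_scope.

Lemma Rplus_assoc' : associative Rplus. Proof. by move=> x y z; rewrite Rplus_assoc. Qed.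
Lemma Rmult_assoc' : associative Rmult. Proof. by move=> x y z; rewrite Rmult_assoc. Qed.
HB.instance Definition _ := Monoid.isComLaw.Build R 0 Rplus Rplus_assoc' Rplus_comm Rplus_0_l.
HB.instance Definition _ := Monoid.isComLaw.Build R 1 Rmult Rmult_assoc' Rmult_comm Rmult_1_l.
HB.instance Definition _ := Monoid.isMulLaw.Build R 0 Rmult Rmult_0_l Rmult_0_r.
HB.instance Definition _ := Monoid.isAddLaw.Build R Rmult Rplus Rmult_plus_distr_r Rmult_plus_distr_l.

Lemma exp_le' x y : x <= y -> exp x <= exp y.
Proof. move=> [h|->]; [left; exact: exp_increasing|lra]. Qed.

Lemma conv_exp (t x : R) : 0 <= x <= 1 -> exp (t*x) <= 1 + x*(exp t - 1).
Proof.
move=> hx.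
have Hd : forall c, derivable_pt_lim (fun y => exp (t*y)) c (t * exp (t*c)).
  move=> c; apply is_derive_Reals; auto_derive; [done|simpl; field].
destruct (Req_dec x 0) as [->|h0]; first by rewrite Rmult_0_r exp_0; lra.
destruct (Req_dec x 1) as [->|h1]; first by rewrite Rmult_1_r; lra.
have [c1 [e1 hc1]] := MVT_cor2 (fun y => exp (t*y)) (fun c => t * exp (t*c)) 0 x ltac:(lra) (fun c _ => Hd c).
have [c2 [e2 hc2]] := MVT_cor2 (fun y => exp (t*y)) (fun c => t * exp (t*c)) x 1 ltac:(lra) (fun c _ => Hd c).
simpl in e1, e2. rewrite Rmult_0_r exp_0 Rmult_1_r in e1 e2.
have hm : t * exp (t*c1) <= t * exp (t*c2).
  destruct (Rle_dec 0 t) as [ht|ht].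
    apply Rmult_le_compat_l => //; apply exp_le'; nra.
  apply Rmult_le_compat_neg_l; [lra|apply exp_le'; nra].
set a := t * exp (t*c1) in e1 hm. set b := t * exp (t*c2) in e2 hm.
have : 0 <= (x * (1 - x)) * (b - a) by apply Rmult_le_pos; nra.
nra.
Qed.

Lemma tlow (d : R) : 0 < d -> exp (-d) < 1 - d + d^2/2.
Proof.
move=> hd.
have Hd : forall c, derivable_pt_lim (fun y => 1 - y + y^2/2 - exp (-y)) c (-1 + c + exp (-c)).
  move=> c; apply is_derive_Reals; auto_derive; [done|simpl; field].
have [c [e hc]] := MVT_cor2 _ _ 0 d hd (fun c _ => Hd c).
have := exp_ineq1 (-c) ltac:(lra).
rewrite Ropp_0 exp_0 in e. nra.
Qed.

Lemma lnb (d : R) : 0 < d -> d <= (1+d) * ln (1+d).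
Proof.
move=> hd.
have := exp_ineq1_le (- ln (1+d)).
rewrite exp_Ropp exp_ln; last lra.
move=> h.
have : 1 - / (1+d) <= ln (1+d) by lra.
have : (1+d) * / (1+d) = 1 by field; lra.
nra.
Qed.

Section S.
Variables (m n : nat) (A : 'I_m -> 'I_n -> R) (gamma : R) (i j : 'I_n).

Lemma prod_ij (F : 'I_m * 'I_n * 'I_n -> R) (H : 'I_m -> R) :
  (forall k, F (k,i,j) = H k) -> (forall t, ~~ ((t.1.2 == i) && (t.2 == j)) -> F t = 1) ->
  \big[Rmult/1]_t F t = \big[Rmult/1]_k H k.
Proof.
move=> h1 h2.
have -> : \big[Rmult/1]_t F t = \big[Rmult/1]_(a : 'I_m * 'I_n) \big[Rmult/1]_(b : 'I_n) F (a, b).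
  by rewrite pair_big /=; apply: eq_bigr => -[a b].
have -> : \big[Rmult/1]_(a : 'I_m * 'I_n) \big[Rmult/1]_(b : 'I_n) F (a, b) =
   \big[Rmult/1]_(k : 'I_m) \big[Rmult/1]_(c : 'I_n) \big[Rmult/1]_(b : 'I_n) F (k, c, b).
  by rewrite [RHS]pair_big /=; apply: eq_bigr => -[a b].
apply: eq_bigr => k _.
rewrite (bigD1 i) //= [\big[_/_]_(_ | _ != _) _]big1 => [|i' hi]; last first.
  by apply: big1 => b _; apply: h2 => /=; rewrite (negbTE hi).
rewrite (bigD1 j) //= [\big[_/_]_(_ | _ != _) _]big1 => [|j' hj]; last by apply: h2 => /=; rewrite eqxx (negbTE hj).
by rewrite h1; ring.
Qed.

Hypothesis hgam : 0 < gamma.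
Hypothesis hA : forall k a, 0 <= A k a <= 1.
Hypothesis hcol : forall a : 'I_n, exists k : 'I_m, A k a <> 0.

Lemma sum_le (T : finType) (F G : T -> R) :
  (forall t, F t <= G t) -> \big[Rplus/0]_t F t <= \big[Rplus/0]_t G t.
Proof. move=> h; apply: (big_ind2 (fun x y => x <= y)) => //; [lra | move=> *; lra]. Qed.

Lemma prod_le (T : finType) (F G : T -> R) :
  (forall t, 0 <= F t <= G t) -> \big[Rmult/1]_t F t <= \big[Rmult/1]_t G t.
Proof.
move=> h.
suff: 0 <= \big[Rmult/1]_t F t <= \big[Rmult/1]_t G t by case.
apply: (big_ind2 (fun x y => 0 <= x <= y)) => //; first lra.
move=> x1 x2 y1 y2 h1 h2; split; first nra.
apply Rmult_le_compat; lra.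
Qed.

Lemma colnorm_pos a : 0 < colnorm A a.
Proof.
rewrite /colnorm; apply sqrt_lt_R0.
have [k hk] := hcol a.
rewrite (bigD1 k) //=.
have := Rsqr_pos_lt _ hk; rewrite /Rsqr.
match goal with |- _ -> 0 < _ + ?s => have : 0 <= s end.
  apply: big_ind => //; [lra | move=> *; lra | move=> k0 _; nra].
move=> *; lra.
Qed.

Lemma pij_bounds a b : 0 < pij A gamma a b <= 1.
Proof.
rewrite /pij.
have h : 0 < gamma / (colnorm A a * colnorm A b).
  apply Rdiv_lt_0_compat => //; apply Rmult_lt_0_compat; exact: colnorm_pos.
split; [apply Rmin_glb_lt; lra | apply Rmin_l].
Qed.

Lemma weight_ge0 w : 0 <= weight A gamma w.
Proof.
apply: big_ind.
- lra.
- move=> x y hx hy; exact: Rmult_le_pos.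
- move=> t _; have := pij_bounds t.1.2 t.2; case: (w t) => /= *; lra.
Qed.

Definition p := pij A gamma i j.
Definition S (w : outcome m n) := \big[Rplus/0]_(k < m) Xv A w i j k.
Definition mu := p * gram A i j.

Lemma mgf (h : 'I_m -> bool -> R) :
  \big[Rplus/0]_(w : outcome m n) (weight A gamma w * \big[Rmult/1]_(k < m) h k (w (k, i, j)))
  = \big[Rmult/1]_(k < m) (p * h k true + (1 - p) * h k false).
Proof.
pose G (t : 'I_m * 'I_n * 'I_n) (b : bool) :=
  (if b then pij A gamma t.1.2 t.2 else 1 - pij A gamma t.1.2 t.2) *
  (if (t.1.2 == i) && (t.2 == j) then h t.1.1 b else 1).
have E1 : forall w : outcome m n, weight A gamma w * \big[Rmult/1]_(k < m) h k (w (k, i, j))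
   = \big[Rmult/1]_t G t (w t).
  move=> w; rewrite /G big_split /=; congr (_ * _); symmetry.
  apply: (prod_ij (fun t => if (t.1.2 == i) && (t.2 == j) then h t.1.1 (w t) else 1)).
    by move=> k /=; rewrite !eqxx.
  by move=> t /negbTE ->.
rewrite (eq_bigr _ (fun w _ => E1 w)) -(bigA_distr_bigA G).
apply: prod_ij.
  move=> k; rewrite big_bool /G /= !eqxx /p /=; ring.
move=> t ht; rewrite big_bool /G /= (negbTE ht) /=; ring.
Qed.

Lemma exp_sum t w : exp (t * S w) = \big[Rmult/1]_(k < m) exp (t * (if w (k, i, j) then A k i * A k j else 0)).
Proof.
rewrite /S big_distrr /=.
exact: (big_morph exp exp_plus exp_0).
Qed.

Lemma markov (E : outcome m n -> bool) a t :
  (forall w, E w -> t * a <= t * S w) ->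
  Pr A gamma E <= exp (-(t*a)) * \big[Rplus/0]_w (weight A gamma w * exp (t * S w)).
Proof.
move=> hE; rewrite /Pr big_mkcond big_distrr /=; apply: sum_le => w.
have hw := weight_ge0 w.
have e1 := exp_pos (-(t*a)); have e2 := exp_pos (t * S w).
case: (boolP (E w)) => /= Ew; last by apply Rmult_le_pos; [lra | apply Rmult_le_pos; lra].
have := hE w Ew; have := exp_ineq1_le (t * S w + -(t*a)).
rewrite exp_plus => *. nra.
Qed.

Lemma mgf_bound t : \big[Rplus/0]_w (weight A gamma w * exp (t * S w)) <= exp (mu * (exp t - 1)).
Proof.
have hp := pij_bounds i j; rewrite -/p in hp.
rewrite (eq_bigr _ (fun w _ => congr1 (Rmult (weight A gamma w)) (exp_sum t w))).
have E2 : \big[Rplus/0]_(w : outcome m n) (weight A gamma w *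
      \big[Rmult/1]_(k < m) exp (t * (if w (k, i, j) then A k i * A k j else 0)))
    = \big[Rmult/1]_(k < m) (p * exp (t * (A k i * A k j)) + (1 - p) * exp (t * 0))
  := mgf (fun k b => exp (t * (if b then A k i * A k j else 0))).
rewrite E2.
apply: Rle_trans.
  apply: (@prod_le _ _ (fun k => exp (p * (A k i * A k j) * (exp t - 1)))) => k /=.
  rewrite Rmult_0_r exp_0.
  have e1 := exp_pos (t * (A k i * A k j)).
  have hx : 0 <= A k i * A k j <= 1 by have := hA k i; have := hA k j; split; nra.
  have := conv_exp t _ hx.
  have := exp_ineq1_le (p * (A k i * A k j) * (exp t - 1)).
  split; nra.
rewrite -(big_morph exp exp_plus exp_0) /mu /gram big_distrr big_distrl /=.
right; congr exp; apply: eq_bigr => k _; ring.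
Qed.

Lemma Y_eq w : colnorm A i * colnorm A j * dimsum_b A gamma w i j = S w / p.
Proof.
have hi := colnorm_pos i; have hj := colnorm_pos j.
rewrite /dimsum_b /p /pij -/(S w).
case: Rle_dec => h /=.
  rewrite Rmin_right //; field; repeat split; lra.
rewrite Rmin_left; last lra.
field; split; lra.
Qed.

Lemma p1_zero (E : outcome m n -> bool) : p = 1 -> (forall w, E w -> S w <> gram A i j) ->
  Pr A gamma E = 0.
Proof.
move=> hp hE; rewrite /Pr; apply: big1 => w Ew.
case: (boolP [forall k, w (k, i, j)]) => [/forallP hall | /forallPn [k hk]].
  exfalso; apply: (hE w Ew); rewrite /S /gram; apply: eq_bigr => k _.
  by rewrite /Xv hall.
rewrite /weight (bigD1 (k, i, j)) //= (negbTE hk) -/p hp /=; ring.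
Qed.

Lemma Rltb_lt x y : Rltb x y -> x < y.
Proof. by rewrite /Rltb; case: Rlt_dec. Qed.

Lemma gram_ge0 : 0 <= gram A i j.
Proof.
apply: big_ind; [lra | move=> x y hx hy /=; lra | move=> k _].
have := hA k i; have := hA k j; nra.
Qed.

Variables (eps alpha : R).
Hypotheses (heps : 0 < eps) (halpha : 0 < alpha) (hgamma : alpha / eps <= gamma)
  (hcos : eps <= cosc A i j).

Lemma mu_ge : gamma / (colnorm A i * colnorm A j) <= 1 -> alpha <= mu.
Proof.
move=> h.
have hi := colnorm_pos i; have hj := colnorm_pos j.
rewrite /mu /p /pij Rmin_right //.
have -> : gamma / (colnorm A i * colnorm A j) * gram A i j = gamma * cosc A i j.
  rewrite /cosc; field; split; lra.
have : alpha <= gamma * eps.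
  have := Rmult_le_compat_r eps _ _ (Rlt_le _ _ heps) hgamma.
  have -> : alpha / eps * eps = alpha by field; lra.
  done.
nra.
Qed.

Lemma upper delta : 0 < delta ->
  Pr A gamma (fun w => Rltb ((1 + delta) * gram A i j)
                            (colnorm A i * colnorm A j * dimsum_b A gamma w i j))
  <= Rpower (exp delta / Rpower (1 + delta) (1 + delta)) alpha.
Proof.
move=> hd.
have hp := pij_bounds i j; rewrite -/p in hp.
have hg := gram_ge0.
have hi := colnorm_pos i; have hj := colnorm_pos j.
have hR : 0 < Rpower (exp delta / Rpower (1 + delta) (1 + delta)) alpha
  by rewrite /Rpower; apply exp_pos.
case: (Rle_dec (gamma / (colnorm A i * colnorm A j)) 1) => h; last first.
  have hp1 : p = 1 by rewrite /p /pij Rmin_left; lra.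
  rewrite p1_zero //; first lra.
  move=> w /Rltb_lt; rewrite Y_eq hp1 /Rdiv Rinv_1 Rmult_1_r => hlt heq.
  rewrite heq in hlt; nra.
have hmu := mu_ge h.
have hl := lnb _ hd.
have hl0 : 0 < ln (1+delta) by nra.
apply: Rle_trans.
  apply: (markov _ ((1 + delta) * mu) (ln (1 + delta))).
  move=> w /Rltb_lt; rewrite Y_eq => hlt.
  have : (1 + delta) * mu < S w.
    have := Rmult_lt_compat_l p _ _ (proj1 hp) hlt.
    have -> : p * (S w / p) = S w by field; lra.
    rewrite /mu; nra.
  nra.
apply: Rle_trans; first by apply: Rmult_le_compat_l; [apply: Rlt_le; apply exp_pos | apply: mgf_bound].
rewrite exp_ln; last lra.
rewrite -exp_plus /Rpower /Rdiv -exp_Ropp -exp_plus ln_exp.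
apply exp_le'.
nra.
Qed.

Lemma lower delta : 0 < delta < 1 ->
  Pr A gamma (fun w => Rltb (colnorm A i * colnorm A j * dimsum_b A gamma w i j)
                            ((1 - delta) * gram A i j))
  < exp (- (alpha * delta ^ 2 / 2)).
Proof.
move=> hd.
have hp := pij_bounds i j; rewrite -/p in hp.
have hg := gram_ge0.
have hi := colnorm_pos i; have hj := colnorm_pos j.
have hR := exp_pos (- (alpha * delta ^ 2 / 2)).
case: (Rle_dec (gamma / (colnorm A i * colnorm A j)) 1) => h; last first.
  have hp1 : p = 1 by rewrite /p /pij Rmin_left; lra.
  rewrite p1_zero //.
  move=> w /Rltb_lt; rewrite Y_eq hp1 /Rdiv Rinv_1 Rmult_1_r => hlt heq.
  rewrite heq in hlt; nra.
have hmu := mu_ge h.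
have hK := tlow _ (proj1 hd).
apply: Rle_lt_trans.
  apply: (markov _ ((1 - delta) * mu) (- delta)).
  move=> w /Rltb_lt; rewrite Y_eq => hlt.
  have : S w < (1 - delta) * mu.
    have := Rmult_lt_compat_l p _ _ (proj1 hp) hlt.
    have -> : p * (S w / p) = S w by field; lra.
    rewrite /mu; nra.
  nra.
apply: Rle_lt_trans; first by apply: Rmult_le_compat_l; [apply: Rlt_le; apply exp_pos | apply: mgf_bound].
rewrite -exp_plus.
apply exp_increasing.
set K := exp (- delta) in hK *.
have h1 : delta * (1 - delta) + K - 1 < - (delta ^ 2 / 2) by lra.
have h2 : mu * (delta * (1 - delta) + K - 1) < mu * (- (delta ^ 2 / 2)).
  apply Rmult_lt_compat_l; lra.
have h3 : mu * (- (delta ^ 2 / 2)) <= alpha * (- (delta ^ 2 / 2)).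
  have : 0 <= delta ^ 2 by nra.
  nra.
nra.
Qed.
End S.

Theorem theorem3 (m n : nat) (A : 'I_m -> 'I_n -> R) (eps alpha gamma : R)
  (hA01 : forall k i, 0 <= A k i <= 1)
  (hcol : forall i : 'I_n, exists k : 'I_m, A k i <> 0)
  (heps : 0 < eps) (halpha : 0 < alpha) (hgamma : alpha / eps <= gamma)
  (i j : 'I_n) (hcos : eps <= cosc A i j) :
  (forall delta : R, 0 < delta ->
     Pr A gamma (fun w => Rltb ((1 + delta) * gram A i j)
                               (colnorm A i * colnorm A j * dimsum_b A gamma w i j))
     <= Rpower (exp delta / Rpower (1 + delta) (1 + delta)) alpha) /\
  (forall delta : R, 0 < delta < 1 ->
     Pr A gamma (fun w => Rltb (colnorm A i * colnorm A j * dimsum_b A gamma w i j)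
                               ((1 - delta) * gram A i j))
     < exp (- (alpha * delta ^ 2 / 2))).
Proof.
have hgam : 0 < gamma.
  apply: Rlt_le_trans hgamma; apply Rdiv_lt_0_compat; lra.
split.
- move=> d hd; exact: (upper m n A gamma i j hgam hA01 hcol eps alpha heps hgamma hcos d hd).
- move=> d hd; eapply (lower m n A gamma i j hgam hA01 hcol eps alpha); eassumption.
Qed.
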